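(* Let $\hat\lambda\in\mathbb{R}$ and $\lambda\in\mathbb{R}\cup\{+\infty\}$ satisfy $0\le\hat\lambda\le1$, $\tfrac12<\lambda\le+\infty$ and $\hat\lambda^2/(1-\hat\lambda)\le\lambda$. Then there exist $q_0\ge0$ and a $3$-system $\mathbf{P}=(P_1,P_2,P_3)$ on $[q_0,+\infty)$ such that $\lim_{q\to\infty}P_1(q)=+\infty$, $\overline{\varphi}(P_3)=\lambda/(1+\lambda)$ (interpreted as $1$ when $\lambda=+\infty$) and $\kappa(P_3)=\hat\lambda/(1+\hat\lambda)$.
   Context: A $3$-system on $[q_0,+\infty)$ is a continuous piecewise linear map $\mathbf{P}=(P_1,P_2,P_3):[q_0,+\infty)\to\mathbb{R}^3$ such that: (1) for each $q\ge q_0$, $0\le P_1(q)\le P_2(q)\le P_3(q)$ and $P_1(q)+P_2(q)+P_3(q)=q$; (2) on each non-empty open subinterval where $\mathbf{P}$ is differentiable, there is $r\in\{1,2,3\}$ such that $P_r$ has slope $1$ and the other components are constant; (3) if $q>q_0$ is a point where $\mathbf{P}$ is not differentiable and $P_r$ has slope $1$ just to the left of $q$ and $P_s$ has slope $1$ just to the right, with $r<s$, then $P_r(q)=P_{r+1}(q)=\cdots=P_s(q)$. For an unbounded continuous piecewise linear $P$ with slopes $0,1$ changing from slope $1$ to $0$ infinitely often: $(q_i)$ is the increasing sequence of abscissas where the slope changes from $1$ to $0$; $\overline{\varphi}(P)=\limsup_{q\to\infty}P(q)/q$; for $\alpha<\overline\varphi(P)$, $(q_{i,\alpha})_i$ is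 the increasing subsequence of the $q_k$ with $P(q_k)/q_k\ge\alpha$, $r_{i,\alpha}=q_{i+1,\alpha}-P(q_{i+1,\alpha})+P(q_{i,\alpha})$, $\kappa_\alpha(P)=\liminf_i P(q_{i,\alpha})/r_{i,\alpha}$, and $\kappa(P)=\lim_{\alpha\to\overline\varphi(P)^-}\kappa_\alpha(P)$. *)

(* Defs.v *)
From Stdlib Require Import Reals Lra.
Open Scope R_scope.

(** A 3-system on [q0,+oo): components P 1, P 2, P 3 (other indices unused).
    Continuous piecewise linear: there are breakpoints q0 = t 0 < t 1 < ...
    tending to +oo such that on each [t n, t (S n)] the component P (r n)
    has slope 1 and the others are constant (conditions (2)); (1) the
    ordering/sum condition; (3) the condition at the breakpoints. *)
Definition is_3system (q0 : R) (P : nat -> R -> R) : Prop :=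
  exists (t : nat -> R) (r : nat -> nat),
    t 0%nat = q0 /\
    (forall n, t n < t (S n)) /\
    (forall M, exists n, M < t n) /\
    (forall n, (1 <= r n <= 3)%nat) /\
    (forall n k q, (1 <= k <= 3)%nat -> t n <= q <= t (S n) ->
       P k q = P k (t n) + (if Nat.eqb k (r n) then q - t n else 0)) /\
    (forall q, q0 <= q ->
       0 <= P 1%nat q /\ P 1%nat q <= P 2%nat q /\ P 2%nat q <= P 3%nat q /\
       P 1%nat q + P 2%nat q + P 3%nat q = q) /\
    (forall n, (r n < r (S n))%nat ->
       forall k, (r n <= k <= r (S n))%nat ->
       P k (t (S n)) = P (r n) (t (S n))).

Definition slope_1_to_0 (q0 : R) (P : R -> R) (q : R) : Prop :=
  q0 < q /\ exists eps, 0 < eps /\ q0 <= q - eps /\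
    (forall x, q - eps <= x <= q -> P x = P q - (q - x)) /\
    (forall x, q <= x <= q + eps -> P x = P q).

Definition enumerates (A : R -> Prop) (e : nat -> R) : Prop :=
  (forall i, e i < e (S i)) /\ (forall i, A (e i)) /\
  (forall q, A q -> exists i, e i = q).

Definition is_limsup_infty (f : R -> R) (L : R) : Prop :=
  forall eps, 0 < eps ->
    (exists M, forall q, M <= q -> f q < L + eps) /\
    (forall M, exists q, M <= q /\ L - eps < f q).

Definition is_liminf_seq (u : nat -> R) (L : R) : Prop :=
  forall eps, 0 < eps ->
    (exists N, forall n, (N <= n)%nat -> L - eps < u n) /\
    (forall N, exists n, (N <= n)%nat /\ u n < L + eps).

Definition phibar_is (P : R -> R) (L : R) : Prop :=
  is_limsup_infty (fun q => P q / q) L.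

Definition kappa_alpha_is (q0 : R) (P : R -> R) (alpha L : R) : Prop :=
  exists e : nat -> R,
    enumerates (fun q => slope_1_to_0 q0 P q /\ alpha <= P q / q) e /\
    is_liminf_seq
      (fun i => P (e i) / (e (S i) - P (e (S i)) + P (e i))) L.

Definition kappa_is (q0 : R) (P : R -> R) (c : R) : Prop :=
  (exists e, enumerates (slope_1_to_0 q0 P) e) /\
  exists phi, phibar_is P phi /\
    forall eps, 0 < eps -> exists delta, 0 < delta /\
      forall alpha, phi - delta < alpha < phi ->
        exists L, kappa_alpha_is q0 P alpha L /\ Rabs (L - c) < eps.

(** lambda in R u {+oo}: None stands for +oo. *)
Definition lam_frac (lam : option R) : R :=
  match lam with Some l => l / (1 + l) | None => 1 end.

Definition lam_hyp (lh : R) (lam : option R) : Prop :=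
  match lam with
  | Some l => 1/2 < l /\ lh < 1 /\ lh ^ 2 / (1 - lh) <= l
  | None => True
  end.

(* Main.v *)
Require Import Defs.
From Stdlib Require Import Reals Lra Lia ClassicalEpsilon.
Open Scope R_scope.

Definition tsum (St : nat -> nat -> R) (b : nat) : R :=
  St 1%nat b + St 2%nat b + St 3%nat b.

Definition idx (t : nat -> R) (q : R) : nat :=
  epsilon (inhabits 0%nat) (fun n => t n <= q < t (S n)).

Lemma inc_lt (t : nat -> R) : (forall n, t n < t (S n)) ->
  forall i j, (i < j)%nat -> t i < t j.
Proof. intros H i j Hij. induction Hij. apply H. specialize (H m). lra. Qed.

Lemma inc_le (t : nat -> R) : (forall n, t n < t (S n)) ->
  forall i j, (i <= j)%nat -> t i <= t j.
Proof. intros H i j Hij. destruct (Nat.eq_dec i j). subst; lra.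
  left. apply inc_lt; auto. lia. Qed.

Lemma exists_block (t : nat -> R) : (forall n, t n < t (S n)) ->
  (forall M, exists n, M < t n) -> forall q, t 0%nat <= q ->
  exists n, t n <= q < t (S n).
Proof.
  intros Hi Hu q Hq. destruct (Hu q) as [N HN].
  induction N. lra.
  destruct (Rlt_or_le q (t N)). apply IHN; auto. exists N; lra.
Qed.

Lemma block_unique (t : nat -> R) : (forall n, t n < t (S n)) ->
  forall n m q, t n <= q < t (S n) -> t m <= q < t (S m) -> n = m.
Proof.
  intros Hi n m q H1 H2. destruct (Nat.lt_total n m) as [H|[H|H]]; auto.
  - assert (t (S n) <= t m) by (apply inc_le; auto). lra.
  - assert (t (S m) <= t n) by (apply inc_le; auto). lra.
Qed.

Lemma idx_spec (t : nat -> R) : (forall n, t n < t (S n)) ->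
  (forall M, exists n, M < t n) -> forall q, t 0%nat <= q ->
  t (idx t q) <= q < t (S (idx t q)).
Proof.
  intros Hi Hu q Hq. unfold idx. apply epsilon_spec. apply exists_block; auto.
Qed.

Lemma idx_eq (t : nat -> R) : (forall n, t n < t (S n)) ->
  forall n q, t n <= q < t (S n) -> idx t q = n.
Proof.
  intros Hi n q H. assert (Hs : t (idx t q) <= q < t (S (idx t q))).
  { unfold idx. apply epsilon_spec. exists n; auto. }
  eapply block_unique; eauto.
Qed.

Definition Psys (St : nat -> nat -> R) (r : nat -> nat) (k : nat) (q : R) : R :=
  St k (idx (tsum St) q) +
  (if Nat.eqb k (r (idx (tsum St) q)) then q - tsum St (idx (tsum St) q) else 0).

Definition framework (St : nat -> nat -> R) (r : nat -> nat) : Prop :=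
  (forall b, (1 <= r b <= 3)%nat) /\
  (forall b k, k <> r b -> St k (S b) = St k b) /\
  (forall b, St (r b) b < St (r b) (S b)) /\
  (forall b, 0 <= St 1%nat b /\ St 1%nat b <= St 2%nat b /\ St 2%nat b <= St 3%nat b) /\
  (forall b, (r b < r (S b))%nat -> forall k, (r b <= k <= r (S b))%nat ->
      St k (S b) = St (r b) (S b)) /\
  (forall M, exists b, M < tsum St b).

Lemma r_cases (n : nat) : (1 <= n <= 3)%nat -> n = 1%nat \/ n = 2%nat \/ n = 3%nat.
Proof. lia. Qed.


Lemma fw_tsum St r : framework St r -> forall b,
  tsum St (S b) = tsum St b + (St (r b) (S b) - St (r b) b).
Proof.
  intros [F1 [F2 [F3 _]]] b. unfold tsum.
  destruct (r_cases _ (F1 b)) as [E|[E|E]]; rewrite E;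
  repeat rewrite (F2 b 1%nat) by lia; repeat rewrite (F2 b 2%nat) by lia;
  repeat rewrite (F2 b 3%nat) by lia; lra.
Qed.

Lemma fw_inc St r : framework St r -> forall b, tsum St b < tsum St (S b).
Proof.
  intros H b. rewrite (fw_tsum St r H). destruct H as [_ [_ [F3 _]]].
  specialize (F3 b). lra.
Qed.

Lemma fw_unb St r : framework St r -> forall M, exists b, M < tsum St b.
Proof. intros H. apply H. Qed.

Lemma Psys_in St r : framework St r -> forall b q,
  tsum St b <= q < tsum St (S b) ->
  Psys St r 1 q = 0 \/ True.
Proof. auto. Qed.

Lemma Psys_in' St r : framework St r -> forall b k q,
  tsum St b <= q < tsum St (S b) ->
  Psys St r k q = St k b + (if Nat.eqb k (r b) then q - tsum St b else 0).
Proof.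
  intros H b k q Hq. unfold Psys.
  rewrite (idx_eq (tsum St) (fw_inc St r H) b q Hq). reflexivity.
Qed.

Lemma Psys_at St r : framework St r -> forall b k, Psys St r k (tsum St b) = St k b.
Proof.
  intros H b k. rewrite (Psys_in' St r H b).
  destruct (Nat.eqb k (r b)); lra. pose proof (fw_inc St r H b). lra.
Qed.

Lemma Psys_block St r : framework St r -> forall b k q,
  tsum St b <= q <= tsum St (S b) ->
  Psys St r k q = St k b + (if Nat.eqb k (r b) then q - tsum St b else 0).
Proof.
  intros H b k q Hq. destruct (Req_dec q (tsum St (S b))) as [E|E].
  - subst q. rewrite Psys_at by auto.
    destruct (Nat.eqb_spec k (r b)) as [E|E].
    + subst k. rewrite (fw_tsum St r H). lra.
    + destruct H as [_ [F2 _]]. rewrite F2 by auto. lra.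
  - apply Psys_in'; auto. lra.
Qed.

Lemma fw_3system St r : framework St r -> is_3system (tsum St 0%nat) (Psys St r).
Proof.
  intros H. pose proof H as H'. destruct H' as [F1 [F2 [F3 [F4 [F5 F6]]]]].
  exists (tsum St), r. split; [reflexivity|]. split; [apply (fw_inc St r H)|].
  split; [exact F6|]. split; [exact F1|]. split.
  { intros n k q Hk Hq. rewrite (Psys_block St r H n k q Hq).
    rewrite Psys_at by auto. reflexivity. }
  split.
  { intros q Hq.
    pose proof (idx_spec (tsum St) (fw_inc St r H) F6 q Hq) as Hb.
    set (n := idx (tsum St) q) in *.
    assert (Hb' : tsum St n <= q < tsum St (S n)) by exact Hb.
    rewrite !(Psys_in' St r H n _ q Hb').
    pose proof (fw_tsum St r H n) as Ht.
    destruct (F4 n) as [A1 [A2 A3]]. destruct (F4 (S n)) as [B1 [B2 B3]].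
    destruct (r_cases _ (F1 n)) as [E|[E|E]]; rewrite E in *; simpl;
    repeat rewrite (F2 n 1%nat) in * by lia; repeat rewrite (F2 n 2%nat) in * by lia;
    repeat rewrite (F2 n 3%nat) in * by lia; unfold tsum in *; lra. }
  intros n Hn k Hk. rewrite !Psys_at by auto. apply F5; auto.
Qed.

Lemma fw_St_mono St r : framework St r -> forall k b b', (b <= b')%nat -> St k b <= St k b'.
Proof.
  intros H k b b' Hb. induction Hb. lra.
  destruct H as [_ [F2 [F3 _]]]. destruct (Nat.eq_dec k (r m)).
  - subst. specialize (F3 m). lra.
  - rewrite F2; auto.
Qed.

Lemma fw_P_ge St r : framework St r -> forall k b q, tsum St b <= q ->
  St k b <= Psys St r k q.
Proof.
  intros H k b q Hq. pose proof H as H'. destruct H' as [_ [_ [_ [_ [_ F6]]]]].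
  assert (H0 : tsum St 0%nat <= q).
  { apply Rle_trans with (tsum St b); auto. apply inc_le. apply (fw_inc St r H). lia. }
  pose proof (idx_spec (tsum St) (fw_inc St r H) F6 q H0) as Hb.
  set (n := idx (tsum St) q) in *.
  assert (Hbn : (b <= n)%nat).
  { destruct (Nat.le_gt_cases b n); auto.
    assert (tsum St (S n) <= tsum St b) by (apply inc_le; [apply (fw_inc St r H)|lia]). lra. }
  rewrite (Psys_in' St r H n k q Hb).
  apply Rle_trans with (St k n). apply fw_St_mono with r; auto.
  destruct (Nat.eqb k (r n)); lra.
Qed.

Lemma fw_P1_unb St r : framework St r -> (forall M, exists b, M < St 1%nat b) ->
  forall M, exists N, forall q, N <= q -> M < Psys St r 1%nat q.
Proof.
  intros H Hu M. destruct (Hu M) as [b Hb]. exists (tsum St b). intros q Hq.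
  pose proof (fw_P_ge St r H 1%nat b q Hq). lra.
Qed.

Lemma fw_const St r : framework St r -> forall k a c, (a <= c)%nat ->
  (forall i, (a <= i < c)%nat -> r i <> k) ->
  forall q, tsum St a <= q <= tsum St c -> Psys St r k q = St k a.
Proof.
  intros H k a c Hac Hr. induction Hac; intros q Hq.
  - assert (q = tsum St a) by lra. subst. apply Psys_at; auto.
  - destruct (Rle_or_lt q (tsum St m)).
    + apply IHHac. intros i Hi. apply Hr. lia. split; lra.
    + rewrite (Psys_block St r H m k q) by lra.
      destruct (Nat.eqb_spec k (r m)). exfalso. apply (Hr m). lia. auto.
      rewrite <- (Psys_at St r H m k). rewrite IHHac. lra.
      intros i Hi. apply Hr. lia. split; [|lra].
      apply inc_le. apply (fw_inc St r H). auto.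
Qed.

Lemma fw_rise St r : framework St r -> forall k b, r b = k ->
  forall q, tsum St b <= q <= tsum St (S b) -> Psys St r k q = St k b + (q - tsum St b).
Proof.
  intros H k b Hr q Hq. rewrite (Psys_block St r H b k q Hq). subst k.
  rewrite Nat.eqb_refl. reflexivity.
Qed.

Definition stepstruct (f : R -> R) (Q d l : nat -> R) : Prop :=
  (forall n, Q n < Q (S n)) /\
  (forall M, exists n, M < Q n) /\
  (forall n, 0 < l n < Q (S n) - Q n) /\
  (forall n q, Q n <= q <= Q (S n) - l n -> f q = d n) /\
  (forall n q, Q (S n) - l n <= q <= Q (S n) -> f q = d (S n) - (Q (S n) - q)) /\
  0 < Q 0%nat.

Lemma div_le_l (a c q : R) : 0 < q -> a <= c * q -> a / q <= c.
Proof.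
  intros Hq H. unfold Rdiv. apply Rmult_le_reg_r with q; auto.
  rewrite Rmult_assoc, Rinv_l, Rmult_1_r by lra. exact H.
Qed.

Lemma div_ge_l (a c q : R) : 0 < q -> c * q <= a -> c <= a / q.
Proof.
  intros Hq H. unfold Rdiv. apply Rmult_le_reg_r with q; auto.
  rewrite Rmult_assoc, Rinv_l, Rmult_1_r by lra. exact H.
Qed.

Lemma div_gt_l (a c q : R) : 0 < q -> c * q < a -> c < a / q.
Proof.
  intros Hq H. unfold Rdiv. apply Rmult_lt_reg_r with q; auto.
  rewrite Rmult_assoc, Rinv_l, Rmult_1_r by lra. exact H.
Qed.

Lemma div_ge_inv (a c q : R) : 0 < q -> c <= a / q -> c * q <= a.
Proof.
  intros Hq H. apply Rmult_le_compat_r with (r := q) in H; [|lra].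
  unfold Rdiv in H. rewrite Rmult_assoc, Rinv_l, Rmult_1_r in H by lra. exact H.
Qed.


Lemma ss_at f Q d l : stepstruct f Q d l -> forall n, f (Q n) = d n.
Proof.
  intros [H1 [H2 [H3 [H4 _]]]] n. apply H4. specialize (H3 n). lra.
Qed.

Lemma ss_Qpos f Q d l : stepstruct f Q d l -> forall n, 0 < Q n.
Proof.
  intros H n. pose proof H as [H1 [_ [_ [_ [_ H6]]]]].
  assert (Q 0%nat <= Q n) by (apply inc_le; auto; lia). lra.
Qed.

Lemma ss_slope f Q d l : stepstruct f Q d l -> forall q,
  slope_1_to_0 (Q 0%nat) f q <-> exists n, q = Q (S n).
Proof.
  intros H q. pose proof H as [H1 [H2 [H3 [H4 [H5 H6]]]]]. split.
  - intros [Hq [eps [He [He2 [HL HR]]]]].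
    destruct (exists_block Q H1 H2 q ltac:(lra)) as [n Hn].
    destruct (Req_dec q (Q n)) as [E|E].
    + destruct n. lra. eauto.
    + exfalso. destruct (Rle_or_lt q (Q (S n) - l n)).
      * set (x := Rmax (q - eps) (Q n)).
        assert (Hx1 : q - eps <= x <= q).
        { unfold x. split. apply Rmax_l. apply Rmax_lub; lra. }
        assert (Hx2 : Q n <= x) by apply Rmax_r.
        assert (x < q). { unfold x. apply Rmax_lub_lt; lra. }
        specialize (HL x Hx1). rewrite (H4 n x) in HL by lra.
        rewrite (H4 n q) in HL by lra. lra.
      * set (x := Rmin (q + eps) (Q (S n))).
        assert (Hx1 : q <= x <= q + eps).
        { unfold x. split. apply Rmin_glb; lra. apply Rmin_l. }
        assert (Hx2 : x <= Q (S n)) by apply Rmin_r.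
        assert (q < x). { unfold x. apply Rmin_glb_lt; lra. }
        specialize (HR x Hx1). rewrite (H5 n x) in HR by lra.
        rewrite (H5 n q) in HR by lra. lra.
  - intros [n E]. subst q.
    pose proof (H3 n) as A. pose proof (H3 (S n)) as B.
    assert (Q 0%nat <= Q n) by (apply inc_le; auto; lia).
    split. { assert (Q 0%nat < Q (S n)) by (apply inc_lt; auto; lia). lra. }
    exists (Rmin (l n) (Q (S (S n)) - l (S n) - Q (S n))).
    assert (E1 : Rmin (l n) (Q (S (S n)) - l (S n) - Q (S n)) <= l n) by apply Rmin_l.
    assert (E2 : Rmin (l n) (Q (S (S n)) - l (S n) - Q (S n)) <= Q (S (S n)) - l (S n) - Q (S n)) by apply Rmin_r.
    assert (E3 : 0 < Rmin (l n) (Q (S (S n)) - l (S n) - Q (S n))) by (apply Rmin_glb_lt; lra).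
    set (e := Rmin (l n) (Q (S (S n)) - l (S n) - Q (S n))) in *.
    split; [lra|]. split; [lra|]. split.
    + intros x Hx. rewrite (H5 n x) by lra. rewrite (H5 n (Q (S n))) by lra. lra.
    + intros x Hx. rewrite (H4 (S n) x) by lra. rewrite (H4 (S n) (Q (S n))) by lra. lra.
Qed.

Lemma ss_bound f Q d l phi : stepstruct f Q d l -> 0 <= phi <= 1 ->
  (forall n, (1 <= n)%nat -> d n <= phi * Q n) ->
  forall q, Q 1%nat <= q -> f q <= phi * q.
Proof.
  intros H Hp Hd q Hq. pose proof H as [H1 [H2 [H3 [H4 [H5 H6]]]]].
  assert (Q 0%nat <= Q 1%nat) by (left; apply H1).
  destruct (exists_block Q H1 H2 q ltac:(lra)) as [n Hn].
  assert (Hn1 : (1 <= n)%nat).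
  { destruct n; [|lia]. lra. }
  destruct (Rle_or_lt q (Q (S n) - l n)).
  - rewrite (H4 n q) by lra. specialize (Hd n Hn1). nra.
  - rewrite (H5 n q) by lra. specialize (Hd (S n) ltac:(lia)). nra.
Qed.

Lemma ss_phibar f Q d l phi : stepstruct f Q d l -> 0 <= phi <= 1 ->
  (forall n, (1 <= n)%nat -> d n <= phi * Q n) ->
  (forall eps, 0 < eps -> forall N, exists n, (N <= n)%nat /\ (1 <= n)%nat /\
       (phi - eps) * Q n < d n) ->
  phibar_is f phi.
Proof.
  intros H Hp Hd Hlow eps Heps. pose proof H as [H1 [H2 [H3 [H4 [H5 H6]]]]].
  split.
  - exists (Q 1%nat). intros q Hq.
    assert (0 < q). { pose proof (ss_Qpos f Q d l H 1). lra. }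
    assert (f q / q <= phi). { apply div_le_l; auto. apply (ss_bound f Q d l); auto. }
    lra.
  - intros M. destruct (H2 M) as [N0 HN0]. destruct (Hlow eps Heps N0) as [n [Hn1 [Hn2 Hn3]]].
    exists (Q n). split.
    + assert (Q N0 <= Q n) by (apply inc_le; auto). lra.
    + rewrite (ss_at f Q d l H). apply div_gt_l. apply (ss_Qpos f Q d l H). lra.
Qed.

Lemma ss_kappa f Q d l phi kap (M : nat -> nat) : stepstruct f Q d l ->
  phibar_is f phi ->
  (forall j, (M j < M (S j))%nat) -> (forall j, (1 <= M j)%nat) ->
  (exists delta, 0 < delta /\ forall alpha, phi - delta < alpha < phi ->
     exists j0, forall n, (1 <= n)%nat ->
       (alpha * Q n <= d n <-> exists j, (j0 <= j)%nat /\ n = M j)) ->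
  (forall eps, 0 < eps -> exists N, forall j, (N <= j)%nat ->
     Rabs (d (M j) / (Q (M (S j)) - d (M (S j)) + d (M j)) - kap) < eps) ->
  kappa_is (Q 0%nat) f kap.
Proof.
  intros H Hphi HM HM1 [delta [Hdel K1]] K2.
  pose proof H as [H1 [H2 [H3 [H4 [H5 H6]]]]].
  split.
  { exists (fun i => Q (S i)). split; [intros; apply H1|]. split.
    - intros i. apply (ss_slope f Q d l H). eauto.
    - intros q Hq. apply (ss_slope f Q d l H) in Hq. destruct Hq as [n E]. eauto. }
  exists phi. split; [exact Hphi|]. intros eps Heps. exists delta. split; [exact Hdel|].
  intros alpha Ha. destruct (K1 alpha Ha) as [j0 Hj0]. exists kap.
  split; [|rewrite Rminus_diag, Rabs_R0; exact Heps].
  exists (fun i => Q (M (i + j0)%nat)). split.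
  - split; [|split].
    + intros i. apply inc_lt; auto; simpl; try apply HM.
    + intros i. split.
      * apply (ss_slope f Q d l H). exists (pred (M (i + j0)%nat)).
        specialize (HM1 (i + j0)%nat). f_equal. lia.
      * rewrite (ss_at f Q d l H). apply div_ge_l. apply (ss_Qpos f Q d l H).
        apply Hj0. apply HM1. exists (i + j0)%nat. split; [lia|reflexivity].
    + intros q [Hs Ha2]. apply (ss_slope f Q d l H) in Hs. destruct Hs as [n E]. subst q.
      rewrite (ss_at f Q d l H) in Ha2. apply div_ge_inv in Ha2; [|apply (ss_Qpos f Q d l H)].
      apply Hj0 in Ha2; [|lia]. destruct Ha2 as [j [Hj E]]. exists (j - j0)%nat.
      rewrite Nat.sub_add by auto. rewrite E. reflexivity.
  - intros eps' Heps'. destruct (K2 eps' Heps') as [N HN]. split.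
    + exists N. intros n Hn. rewrite !(ss_at f Q d l H). simpl.
      specialize (HN (n + j0)%nat ltac:(lia)). apply Rabs_def2 in HN. lra.
    + intros N'. exists (Nat.max N N'). split; [lia|].
      rewrite !(ss_at f Q d l H). simpl.
      specialize (HN (Nat.max N N' + j0)%nat ltac:(lia)). apply Rabs_def2 in HN. lra.
Qed.

Lemma final St r Q d l phi kap (M : nat -> nat) :
  framework St r -> (forall X, exists b, X < St 1%nat b) ->
  stepstruct (Psys St r 3%nat) Q d l -> Q 0%nat = tsum St 0%nat ->
  0 <= phi <= 1 ->
  (forall n, (1 <= n)%nat -> d n <= phi * Q n) ->
  (forall eps, 0 < eps -> forall N, exists n, (N <= n)%nat /\ (1 <= n)%nat /\
       (phi - eps) * Q n < d n) ->
  (forall j, (M j < M (S j))%nat) -> (forall j, (1 <= M j)%nat) ->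
  (exists delta, 0 < delta /\ forall alpha, phi - delta < alpha < phi ->
     exists j0, forall n, (1 <= n)%nat ->
       (alpha * Q n <= d n <-> exists j, (j0 <= j)%nat /\ n = M j)) ->
  (forall eps, 0 < eps -> exists N, forall j, (N <= j)%nat ->
     Rabs (d (M j) / (Q (M (S j)) - d (M (S j)) + d (M j)) - kap) < eps) ->
  exists (q0 : R) (P : nat -> R -> R),
    0 <= q0 /\ is_3system q0 P /\
    (forall M, exists N, forall q, N <= q -> M < P 1%nat q) /\
    phibar_is (P 3%nat) phi /\
    kappa_is q0 (P 3%nat) kap.
Proof.
  intros HF HU HS HQ0 Hp Hd Hlow HM HM1 K1 K2.
  assert (Hph : phibar_is (Psys St r 3%nat) phi) by (eapply ss_phibar; eauto).
  exists (tsum St 0%nat), (Psys St r). split.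
  { pose proof (ss_Qpos _ _ _ _ HS 0). lra. }
  split; [apply fw_3system; auto|]. split; [apply fw_P1_unb; auto|].
  split; [exact Hph|]. rewrite <- HQ0. eapply ss_kappa; eauto.
Qed.

Lemma nat_split3 (b : nat) : exists n j, (j < 3)%nat /\ b = (3 * n + j)%nat.
Proof. exists (b / 3)%nat, (b mod 3)%nat. split. apply Nat.mod_upper_bound; lia.
  apply Nat.div_mod; lia. Qed.

Lemma dm (K n j : nat) : (j < K)%nat -> ((K * n + j) / K = n /\ (K * n + j) mod K = j)%nat.
Proof. intros H. split; symmetry; [apply Nat.div_unique with j|apply Nat.mod_unique with n]; lia. Qed.

Definition stB (D : nat -> R) (k n j : nat) : R :=
  match k with
  | 1%nat => if Nat.eqb j 2 then D (S n) else D n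
  | 2%nat => if Nat.eqb j 0 then D n else D (S n)
  | 3%nat => D (S n)
  | _ => 0
  end.
Definition StB (D : nat -> R) (k b : nat) : R := stB D k (b / 3) (b mod 3).
Definition rB (b : nat) : nat :=
  match (b mod 3)%nat with 0%nat => 2%nat | 1%nat => 1%nat | _ => 3%nat end.

Lemma StB_eq D k n j : (j < 3)%nat -> StB D k (3 * n + j) = stB D k n j.
Proof. intros H. unfold StB. destruct (dm 3 n j H) as [A B]. rewrite A, B. reflexivity. Qed.
Lemma rB_eq n j : (j < 3)%nat -> rB (3 * n + j) = match j with 0%nat => 2%nat | 1%nat => 1%nat | _ => 3%nat end.
Proof. intros H. unfold rB. destruct (dm 3 n j H) as [A B]. rewrite B. reflexivity. Qed.

Lemma famB_fw D : (forall n, 0 < D n) -> (forall n, D n < D (S n)) ->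
  (forall X, exists n, X < D n) -> framework (StB D) rB.
Proof.
  intros Hp Hi Hu.
  assert (Hsucc : forall n j, (j < 3)%nat -> forall (P : nat -> Prop),
     (j < 2 -> P (3 * n + S j))%nat -> (j = 2 -> P (3 * S n + 0))%nat -> P (S (3 * n + j))%nat).
  { intros n j Hj P A B. destruct (Nat.eq_dec j 2).
    - subst. replace (S (3 * n + 2)) with (3 * S n + 0)%nat by lia. auto.
    - replace (S (3 * n + j)) with (3 * n + S j)%nat by lia. apply A; lia. }
  split; [|split; [|split; [|split; [|split]]]].
  - intros b. destruct (nat_split3 b) as [n [j [Hj ->]]]. rewrite rB_eq by auto.
    destruct j as [|[|[|]]]; lia.
  - intros b k Hk. destruct (nat_split3 b) as [n [j [Hj ->]]]. rewrite rB_eq in Hk by auto.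
    apply (Hsucc n j Hj); intros Hj2; rewrite !StB_eq by lia.
    + destruct j as [|[|]]; [ | | lia]; destruct k as [|[|[|[|]]]]; simpl; auto; lia.
    + subst. destruct k as [|[|[|[|]]]]; simpl; auto; lia.
  - intros b. destruct (nat_split3 b) as [n [j [Hj ->]]]. rewrite rB_eq by auto.
    apply (Hsucc n j Hj); intros Hj2; rewrite !StB_eq by lia.
    + destruct j as [|[|]]; [ | | lia]; simpl; apply Hi.
    + subst. simpl. apply Hi.
  - intros b. destruct (nat_split3 b) as [n [j [Hj ->]]]. rewrite !StB_eq by auto.
    pose proof (Hp n). pose proof (Hi n).
    destruct j as [|[|[|]]]; simpl; try lia; lra.
  - intros b Hr k Hk. destruct (nat_split3 b) as [n [j [Hj ->]]].
    revert Hr Hk. rewrite rB_eq by auto.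
    apply (Hsucc n j Hj); intros Hj2; rewrite ?rB_eq by lia; intros Hr Hk; rewrite !StB_eq by lia.
    + destruct j as [|[|]]; [lia| |lia]. simpl in *.
      destruct k as [|[|[|[|]]]]; simpl; try lia; reflexivity.
    + subst. lia.
  - intros X. destruct (Hu X) as [n Hn]. exists (3 * n)%nat.
    unfold tsum. replace (3 * n)%nat with (3 * n + 0)%nat by lia.
    rewrite !StB_eq by lia. simpl. pose proof (Hp n). pose proof (Hp (S n)). lra.
Qed.

Lemma famB_ss D : (forall n, 0 < D n) -> (forall n, D n < D (S n)) ->
  (forall X, exists n, X < D n) ->
  stepstruct (Psys (StB D) rB 3%nat) (fun n => 2 * D n + D (S n)) (fun n => D (S n))
    (fun n => D (S (S n)) - D (S n)).
Proof.
  intros Hp Hi Hu. pose proof (famB_fw D Hp Hi Hu) as HF.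
  assert (Ht : forall n j, (j < 3)%nat -> tsum (StB D) (3 * n + j) =
     StB D 1 (3 * n + j) + StB D 2 (3 * n + j) + StB D 3 (3 * n + j)) by reflexivity.
  assert (T0 : forall n, tsum (StB D) (3 * n + 0) = 2 * D n + D (S n)).
  { intros n. rewrite Ht, !StB_eq by lia. simpl. lra. }
  assert (T2 : forall n, tsum (StB D) (3 * n + 2) = 3 * D (S n)).
  { intros n. rewrite Ht, !StB_eq by lia. simpl. lra. }
  split; [|split; [|split; [|split; [|split]]]]; simpl.
  - intros n. pose proof (Hi n). pose proof (Hi (S n)). lra.
  - intros X. destruct (Hu X) as [n Hn]. exists n. pose proof (Hp n). pose proof (Hp (S n)). lra.
  - intros n. pose proof (Hi n). pose proof (Hi (S n)). lra.
  - intros n q Hq. rewrite (fw_const _ _ HF 3 (3 * n + 0) (3 * n + 2)).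
    + rewrite StB_eq by lia. reflexivity.
    + lia.
    + intros i Hi2. assert (i = 3 * n + 0 \/ i = 3 * n + 1)%nat as [->| ->] by lia;
      rewrite rB_eq by lia; discriminate.
    + rewrite T0, T2. lra.
  - intros n q Hq. rewrite (fw_rise _ _ HF 3 (3 * n + 2)).
    + rewrite StB_eq, T2 by lia. simpl. lra.
    + rewrite rB_eq by lia. reflexivity.
    + rewrite T2. replace (S (3 * n + 2)) with (3 * S n + 0)%nat by lia. rewrite T0. lra.
  - pose proof (Hp 0%nat). pose proof (Hp 1%nat). lra.
Qed.

Lemma famB_Q0 D : (fun n => 2 * D n + D (S n)) 0%nat = tsum (StB D) 0%nat.
Proof. unfold tsum. replace 0%nat with (3 * 0 + 0)%nat by lia. rewrite !StB_eq by lia. simpl. lra. Qed.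

Lemma famB_P1 D : (forall X, exists n, X < D n) -> forall X, exists b, X < StB D 1 b.
Proof. intros Hu X. destruct (Hu X) as [n Hn]. exists (3 * n + 0)%nat. rewrite StB_eq by lia. exact Hn. Qed.

Lemma nat_inc_lt (M : nat -> nat) : (forall j, (M j < M (S j))%nat) ->
  forall i j, (i < j)%nat -> (M i < M j)%nat.
Proof. intros H i j Hij. induction Hij. apply H. specialize (H m). lia. Qed.

Lemma nat_inc_ge (M : nat -> nat) : (forall j, (M j < M (S j))%nat) -> forall j, (j <= M j + M 0)%nat.
Proof. intros H j. induction j. lia. specialize (H j). lia. Qed.

Lemma least_witness (C : nat -> Prop) : (forall j, C j -> C (S j)) -> (exists j, C j) ->
  exists j0, forall j, C j <-> (j0 <= j)%nat.
Proof.
  intros Hm [j1 Hj1]. revert Hj1. induction j1; intros Hj1.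
  - exists 0%nat. intros j. split; [lia|]. intros _. induction j; auto.
  - destruct (classic (C j1)) as [Hc|Hc]. auto.
    exists (S j1). intros j. split.
    + intros Hj. destruct (Nat.le_gt_cases (S j1) j); auto. exfalso. apply Hc.
      assert (forall k, C (j + k)%nat) by (intros k; induction k; [rewrite Nat.add_0_r; auto|
        replace (j + S k)%nat with (S (j + k)) by lia; auto]).
      replace j1 with (j + (j1 - j))%nat by lia. auto.
    + intros Hj. assert (forall k, C (S j1 + k)%nat) by (intros k; induction k; [rewrite Nat.add_0_r; auto|
        replace (S j1 + S k)%nat with (S (S j1 + k)) by lia; auto]).
      replace j with (S j1 + (j - S j1))%nat by lia. auto.
Qed.

Definition mainb (M : nat -> nat) (n : nat) : bool :=
  if excluded_middle_informative (exists j, M j = n) then true else false.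

Fixpoint DB (M : nat -> nat) (gm : nat -> R) (h : R) (n : nat) : R :=
  match n with
  | 0%nat => 1
  | S m => DB M gm h m * (if mainb M m then gm m else h)
  end.

Lemma mainb_true M n : mainb M n = true <-> exists j, M j = n.
Proof. unfold mainb. destruct (excluded_middle_informative _); split; auto; intros; try discriminate; tauto. Qed.

Lemma DB_gaps M gm h : forall a m, (forall i, (a <= i < a + m)%nat -> mainb M i = false) ->
  DB M gm h (a + m) = DB M gm h a * h ^ m.
Proof.
  intros a m. induction m; intros H. rewrite Nat.add_0_r. simpl. lra.
  replace (a + S m)%nat with (S (a + m)) by lia. simpl.
  rewrite (H (a + m)%nat) by lia. rewrite IHm. lra. intros i Hi. apply H. lia.
Qed.

Theorem famB_main (M : nat -> nat) (gm : nat -> R) (h phi kap : R) :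
  1 < h -> (forall n, h <= gm n) -> 0 < phi <= 1 ->
  (forall n, gm n <= phi * (2 + gm n)) -> h < phi * (2 + h) ->
  (forall j, (M j < M (S j))%nat) -> (forall j, (1 <= M j)%nat) ->
  (forall j, gm (M j) <= gm (M (S j))) ->
  (forall eps, 0 < eps -> exists j, (phi - eps) * (2 + gm (M j)) < gm (M j)) ->
  (forall eps, 0 < eps -> exists N, forall j, (N <= j)%nat ->
     Rabs (1 / (2 * h ^ (M (S j) - S (M j)) + 1) - kap) < eps) ->
  exists (q0 : R) (P : nat -> R -> R),
    0 <= q0 /\ is_3system q0 P /\
    (forall M, exists N, forall q, N <= q -> M < P 1%nat q) /\
    phibar_is (P 3%nat) phi /\
    kappa_is q0 (P 3%nat) kap.
Proof.
  intros Hh Hgm Hphi Hgmphi Hhphi HM HM1 Hgmmono Hlim K2.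
  set (D := DB M gm h).
  assert (Hrho : forall n, h <= (if mainb M n then gm n else h)).
  { intros n. destruct (mainb M n); auto; lra. }
  assert (Dge : forall n, 1 + INR n * (h - 1) <= D n).
  { induction n. unfold D; simpl; lra. rewrite S_INR. unfold D in *. simpl.
    specialize (Hrho n). assert (1 <= DB M gm h n). { assert (0 <= INR n) by apply pos_INR. nra. }
    assert (0 <= (DB M gm h n - 1) * (h - 1)) by (apply Rmult_le_pos; lra).
    assert (0 <= DB M gm h n * ((if mainb M n then gm n else h) - h)) by (apply Rmult_le_pos; lra).
    nra. }
  assert (Dp : forall n, 0 < D n).
  { intros n. specialize (Dge n). assert (0 <= INR n) by apply pos_INR. nra. }
  assert (Di : forall n, D n < D (S n)).
  { intros n. unfold D. simpl. specialize (Hrho n). specialize (Dp n). unfold D in Dp. nra. }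
  assert (Du : forall X, exists n, X < D n).
  { intros X. destruct (INR_archimed (h - 1) X) as [n Hn]. lra. exists n. specialize (Dge n). lra. }
  assert (Dmain : forall n, mainb M n = true -> D (S n) = D n * gm n).
  { intros n E. unfold D. simpl. rewrite E. reflexivity. }
  assert (Dnon : forall n, mainb M n = false -> D (S n) = D n * h).
  { intros n E. unfold D. simpl. rewrite E. reflexivity. }
  assert (Minj : forall i j, M i = M j -> i = j).
  { intros i j E. destruct (Nat.lt_total i j) as [H|[H|H]]; auto;
    pose proof (nat_inc_lt M HM _ _ H); lia. }
  assert (Malpha : forall alpha, alpha < 1 -> forall j, alpha * (2 + gm (M j)) <= gm (M j) ->
     alpha * (2 + gm (M (S j))) <= gm (M (S j))).
  { intros alpha Ha j Hj. specialize (Hgmmono j). nra. }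
  apply (final (StB D) rB (fun n => 2 * D n + D (S n)) (fun n => D (S n))
    (fun n => D (S (S n)) - D (S n)) phi kap M).
  - apply famB_fw; auto.
  - apply famB_P1; auto.
  - apply famB_ss; auto.
  - apply famB_Q0.
  - lra.
  - intros n _. destruct (mainb M n) eqn:E.
    + rewrite (Dmain n E). specialize (Hgmphi n). specialize (Dp n). nra.
    + rewrite (Dnon n E). specialize (Dp n). nra.
  - intros eps Heps N. destruct (Hlim (eps/2) ltac:(lra)) as [j0 Hj0].
    set (j := Nat.max j0 N).
    assert (Hj : (phi - eps/2) * (2 + gm (M j)) <= gm (M j)).
    { unfold j. assert (Hk : forall k, (phi - eps/2) * (2 + gm (M (j0 + k)%nat)) <= gm (M (j0 + k)%nat)).
      { induction k. rewrite Nat.add_0_r. lra. replace (j0 + S k)%nat with (S (j0 + k)) by lia.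
        apply Malpha; auto. lra. }
      replace (Nat.max j0 N) with (j0 + (Nat.max j0 N - j0))%nat by lia. apply Hk. }
    assert (Hj' : (phi - eps) * (2 + gm (M j)) < gm (M j)).
    { specialize (Hgm (M j)). nra. }
    exists (M j). split.
    { assert (forall k, (k <= M k)%nat) by (intros k; induction k; [lia|specialize (HM k); lia]).
      specialize (H j). unfold j in *. lia. }
    split. apply HM1.
    assert (mainb M (M j) = true) by (apply mainb_true; eauto).
    rewrite (Dmain _ H). specialize (Dp (M j)). nra.
  - exact HM.
  - exact HM1.
  - exists (phi - h / (2 + h)). split.
    { apply Rlt_0_minus. apply Rmult_lt_reg_r with (2 + h). lra.
      unfold Rdiv. rewrite Rmult_assoc, Rinv_l, Rmult_1_r by lra. lra. }
    intros alpha Ha.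
    assert (Hah : h < alpha * (2 + h)).
    { assert (h / (2 + h) < alpha) by lra.
      apply Rmult_lt_compat_r with (r := 2 + h) in H; [|lra].
      unfold Rdiv in H. rewrite Rmult_assoc, Rinv_l, Rmult_1_r in H by lra. lra. }
    destruct (least_witness (fun j => alpha * (2 + gm (M j)) <= gm (M j))) as [j0 Hj0].
    { intros j. apply Malpha. lra. }
    { destruct (Hlim (phi - alpha) ltac:(lra)) as [j Hj]. exists j.
      replace (phi - (phi - alpha)) with alpha in Hj by ring. lra. }
    exists j0. intros n Hn. destruct (mainb M n) eqn:E.
    + rewrite (Dmain n E). pose proof E as E'. apply mainb_true in E'. destruct E' as [j Ej]. subst n.
      specialize (Dp (M j)). split.
      * intros Hx. exists j. split; auto. apply Hj0. nra.
      * intros [j' [Hj' Ej']]. apply Minj in Ej'. subst j'. apply Hj0 in Hj'. nra.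
    + rewrite (Dnon n E). specialize (Dp n). split.
      * intros Hx. nra.
      * intros [j [_ Ej]]. assert (mainb M n = true) by (apply mainb_true; eauto). congruence.
  - intros eps Heps. destruct (K2 eps Heps) as [N HN]. exists N. intros j Hj.
    specialize (HN j Hj).
    assert (HD : D (M (S j)) = D (S (M j)) * h ^ (M (S j) - S (M j))).
    { unfold D. rewrite <- DB_gaps. f_equal. pose proof (HM j). lia.
      intros i Hi. destruct (mainb M i) eqn:E; auto. apply mainb_true in E. destruct E as [j' Ej'].
      subst i. destruct (Nat.le_gt_cases j' j).
      - destruct (Nat.eq_dec j' j). subst; lia. pose proof (nat_inc_lt M HM j' j ltac:(lia)). lia.
      - destruct (Nat.eq_dec j' (S j)). subst; lia. pose proof (nat_inc_lt M HM (S j) j' ltac:(lia)). lia. }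
    cbv beta in HN |- *.
    replace (2 * D (M (S j)) + D (S (M (S j))) - D (S (M (S j))) + D (S (M j)))
      with (2 * D (M (S j)) + D (S (M j))) by ring.
    rewrite HD. replace (D (S (M j)) / (2 * (D (S (M j)) * h ^ (M (S j) - S (M j))) + D (S (M j))))
      with (1 / (2 * h ^ (M (S j) - S (M j)) + 1)); auto.
    specialize (Dp (S (M j))). assert (0 < h ^ (M (S j) - S (M j))) by (apply pow_lt; lra).
    assert (0 < D (S (M j)) * h ^ (M (S j) - S (M j))) by (apply Rmult_lt_0_compat; lra).
    field. repeat split; lra.
Qed.

Definition stA (p e d : nat -> R) (k n j : nat) : R :=
  match k with
  | 1%nat => if Nat.ltb j 2 then p n else p (S n)
  | 2%nat => match j with 0%nat => e n | 1%nat | 2%nat => p (S n) | _ => d n end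
  | 3%nat => d n
  | _ => 0
  end.
Definition StA p e d (k b : nat) : R := stA p e d k (b / 4) (b mod 4).
Definition rA (b : nat) : nat :=
  match (b mod 4)%nat with 0%nat => 2%nat | 1%nat => 1%nat | 2%nat => 2%nat | _ => 3%nat end.

Lemma StA_eq p e d k n j : (j < 4)%nat -> StA p e d k (4 * n + j) = stA p e d k n j.
Proof. intros H. unfold StA. destruct (dm 4 n j H) as [A B]. rewrite A, B. reflexivity. Qed.
Lemma rA_eq n j : (j < 4)%nat -> rA (4 * n + j) =
  match j with 0%nat => 2%nat | 1%nat => 1%nat | 2%nat => 2%nat | _ => 3%nat end.
Proof. intros H. unfold rA. destruct (dm 4 n j H) as [A B]. rewrite B. reflexivity. Qed.

Lemma nat_split4 (b : nat) : exists n j, (j < 4)%nat /\ b = (4 * n + j)%nat.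
Proof. exists (b / 4)%nat, (b mod 4)%nat. split. apply Nat.mod_upper_bound; lia.
  apply Nat.div_mod; lia. Qed.

Definition Ahyp (p e d : nat -> R) : Prop :=
  (forall n, 0 <= p n /\ p n <= e n /\ e n < p (S n) /\ p (S n) < d n /\ d n < d (S n)) /\
  (forall n, e (S n) = d n) /\ (forall X, exists n, X < d n).

Lemma famA_fw p e d : Ahyp p e d -> framework (StA p e d) rA.
Proof.
  intros [Hh [He Hu]].
  assert (Hsucc : forall n j, (j < 4)%nat -> forall (P : nat -> Prop),
     (j < 3 -> P (4 * n + S j))%nat -> (j = 3 -> P (4 * S n + 0))%nat -> P (S (4 * n + j))%nat).
  { intros n j Hj P A B. destruct (Nat.eq_dec j 3).
    - subst. replace (S (4 * n + 3)) with (4 * S n + 0)%nat by lia. auto.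
    - replace (S (4 * n + j)) with (4 * n + S j)%nat by lia. apply A; lia. }
  split; [|split; [|split; [|split; [|split]]]].
  - intros b. destruct (nat_split4 b) as [n [j [Hj ->]]]. rewrite rA_eq by auto.
    destruct j as [|[|[|[|]]]]; lia.
  - intros b k Hk. destruct (nat_split4 b) as [n [j [Hj ->]]]. rewrite rA_eq in Hk by auto.
    apply (Hsucc n j Hj); intros Hj2; rewrite !StA_eq by lia.
    + destruct j as [|[|[|]]]; [ | | | lia]; destruct k as [|[|[|[|]]]]; simpl; auto; lia.
    + subst. destruct k as [|[|[|[|]]]]; simpl; auto; try lia; try (rewrite He; reflexivity).
  - intros b. destruct (nat_split4 b) as [n [j [Hj ->]]]. rewrite rA_eq by auto.
    destruct (Hh n) as [A1 [A2 [A3 [A4 A5]]]].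
    apply (Hsucc n j Hj); intros Hj2; rewrite !StA_eq by lia.
    + destruct j as [|[|[|]]]; [ | | | lia]; simpl; lra.
    + subst. simpl. lra.
  - intros b. destruct (nat_split4 b) as [n [j [Hj ->]]]. rewrite !StA_eq by auto.
    destruct (Hh n) as [A1 [A2 [A3 [A4 A5]]]].
    destruct j as [|[|[|[|]]]]; simpl; try lia; lra.
  - intros b Hr k Hk. destruct (nat_split4 b) as [n [j [Hj ->]]].
    revert Hr Hk. rewrite rA_eq by auto.
    apply (Hsucc n j Hj); intros Hj2; rewrite ?rA_eq by lia; intros Hr Hk; rewrite !StA_eq by lia.
    + destruct j as [|[|[|]]]; [lia| | |lia]; simpl in *;
      destruct k as [|[|[|[|]]]]; simpl; try lia; reflexivity.
    + subst. lia.
  - intros X. destruct (Hu X) as [n Hn]. exists (4 * n)%nat.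
    unfold tsum. replace (4 * n)%nat with (4 * n + 0)%nat by lia.
    rewrite !StA_eq by lia. simpl. destruct (Hh n) as [A1 [A2 [A3 [A4 A5]]]]. lra.
Qed.

Lemma famA_ss p e d : Ahyp p e d -> 0 < d 0%nat ->
  stepstruct (Psys (StA p e d) rA 3%nat) (fun n => p n + e n + d n) d
    (fun n => d (S n) - d n).
Proof.
  intros HA Hd0. pose proof (famA_fw p e d HA) as HF. pose proof HA as [Hh [He Hu]].
  assert (Ht : forall n j, (j < 4)%nat -> tsum (StA p e d) (4 * n + j) =
     StA p e d 1 (4 * n + j) + StA p e d 2 (4 * n + j) + StA p e d 3 (4 * n + j)) by reflexivity.
  assert (T0 : forall n, tsum (StA p e d) (4 * n + 0) = p n + e n + d n).
  { intros n. rewrite Ht, !StA_eq by lia. simpl. lra. }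
  assert (T3 : forall n, tsum (StA p e d) (4 * n + 3) = p (S n) + 2 * d n).
  { intros n. rewrite Ht, !StA_eq by lia. simpl. lra. }
  split; [|split; [|split; [|split; [|split]]]]; simpl.
  - intros n. destruct (Hh n) as [A1 [A2 [A3 [A4 A5]]]]. rewrite He.
    destruct (Hh (S n)) as [B1 [B2 [B3 [B4 B5]]]]. lra.
  - intros X. destruct (Hu X) as [n Hn]. exists n. destruct (Hh n) as [A1 [A2 [A3 [A4 A5]]]]. lra.
  - intros n. destruct (Hh n) as [A1 [A2 [A3 [A4 A5]]]]. rewrite He.
    destruct (Hh (S n)) as [B1 [B2 [B3 [B4 B5]]]]. lra.
  - intros n q Hq. cbv beta in Hq. rewrite (fw_const _ _ HF 3 (4 * n + 0) (4 * n + 3)).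
    + rewrite StA_eq by lia. reflexivity.
    + lia.
    + intros i Hi2. assert (i = 4 * n + 0 \/ i = 4 * n + 1 \/ i = 4 * n + 2)%nat as [->|[->| ->]] by lia;
      rewrite rA_eq by lia; discriminate.
    + rewrite T0, T3. rewrite He in Hq. lra.
  - intros n q Hq. cbv beta in Hq. rewrite (fw_rise _ _ HF 3 (4 * n + 3)).
    + rewrite StA_eq, T3 by lia. simpl. rewrite He. lra.
    + rewrite rA_eq by lia. reflexivity.
    + rewrite T3. replace (S (4 * n + 3)) with (4 * S n + 0)%nat by lia. rewrite T0. rewrite He in *. lra.
  - destruct (Hh 0%nat) as [A1 [A2 [A3 [A4 A5]]]]. lra.
Qed.

Lemma famA_Q0 p e d : (fun n => p n + e n + d n) 0%nat = tsum (StA p e d) 0%nat.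
Proof. unfold tsum. replace 0%nat with (4 * 0 + 0)%nat by lia. rewrite !StA_eq by lia. simpl. lra. Qed.

Lemma famA_P1 p e d : Ahyp p e d -> forall X, exists b, X < StA p e d 1 b.
Proof.
  intros [Hh [He Hu]] X. destruct (Hu X) as [n Hn]. exists (4 * S n + 2)%nat. rewrite StA_eq by lia.
  simpl. destruct (Hh (S n)) as [A1 [A2 [A3 [A4 A5]]]]. rewrite He in A3. lra.
Qed.

Fixpoint dA (g : nat -> R) (n : nat) : R :=
  match n with 0%nat => 1 | S m => dA g m * g m end.
Definition pA (g u : nat -> R) (n : nat) : R :=
  match n with 0%nat => u 0%nat / 2 | S m => u m * dA g m end.
Definition eA (g u : nat -> R) (n : nat) : R :=
  match n with 0%nat => u 0%nat / 2 | S m => dA g m end.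

Theorem famA_main (g u : nat -> R) (c phi kap : R) :
  1 < c -> (forall n, c <= g n) -> (forall n, 0 < u n < 1) ->
  (forall n, 1 < u (S n) * g n) -> 0 < phi <= 1 ->
  (forall n, g n <= phi * (u n + 1 + g n)) ->
  (forall n, u (S n) <= u n) -> (forall n, g n <= g (S n)) ->
  (forall eps, 0 < eps -> exists n, (phi - eps) * (u n + 1 + g n) < g n) ->
  (forall eps, 0 < eps -> exists N, forall j, (N <= j)%nat ->
     Rabs (1 / (u (S j) + 2) - kap) < eps) ->
  exists (q0 : R) (P : nat -> R -> R),
    0 <= q0 /\ is_3system q0 P /\
    (forall M, exists N, forall q, N <= q -> M < P 1%nat q) /\
    phibar_is (P 3%nat) phi /\
    kappa_is q0 (P 3%nat) kap.
Proof.
  intros Hc Hg Hu Hug Hphi Hgphi Humono Hgmono Hlim K2.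
  set (d := dA g). set (p := pA g u). set (e := eA g u).
  assert (Dge : forall n, 1 + INR n * (c - 1) <= d n).
  { induction n. unfold d; simpl; lra. rewrite S_INR. unfold d in *. simpl.
    specialize (Hg n). assert (1 <= dA g n). { assert (0 <= INR n) by apply pos_INR. nra. }
    assert (0 <= (dA g n - 1) * (c - 1)) by (apply Rmult_le_pos; lra).
    assert (0 <= dA g n * (g n - c)) by (apply Rmult_le_pos; lra). nra. }
  assert (Dp : forall n, 0 < d n).
  { intros n. specialize (Dge n). assert (0 <= INR n) by apply pos_INR. nra. }
  assert (DS : forall n, d (S n) = d n * g n) by reflexivity.
  assert (HA : Ahyp p e d).
  { split; [|split].
    - intros [|m].
      + unfold p, e, pA, eA. simpl. specialize (Hu 0%nat). specialize (Hg 0%nat).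
        unfold d; simpl. lra.
      + unfold p, e, pA, eA. fold d. rewrite !DS. pose proof (Hu m). pose proof (Hu (S m)).
        pose proof (Hg m). pose proof (Hug m). pose proof (Dp m).
        assert (0 < d m * g m) by nra.
        pose proof (Hg (S m)). repeat split; try nra.
    - intros n. reflexivity.
    - intros X. destruct (INR_archimed (c - 1) X) as [n Hn]. lra. exists n. specialize (Dge n). lra. }
  assert (Malpha : forall alpha, alpha < 1 -> forall m, alpha * (u m + 1 + g m) <= g m ->
     alpha * (u (S m) + 1 + g (S m)) <= g (S m)).
  { intros alpha Ha m Hm. specialize (Humono m). specialize (Hgmono m). pose proof (Hu (S m)).
    pose proof (Hg (S m)). pose proof (Hu m).
    destruct (Rle_or_lt 0 alpha).
    - assert (0 <= (g (S m) - g m) * (1 - alpha)) by (apply Rmult_le_pos; lra).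
      assert (0 <= alpha * (u m - u (S m))) by (apply Rmult_le_pos; lra). nra.
    - assert (alpha * (u (S m) + 1 + g (S m)) < 0) by (apply Rmult_neg_pos; lra). lra. }
  assert (HQ : forall m, p (S m) + e (S m) + d (S m) = d m * (u m + 1 + g m)).
  { intros m. unfold p, e, pA, eA. fold d. rewrite DS. ring. }
  apply (final (StA p e d) rA (fun n => p n + e n + d n) d (fun n => d (S n) - d n) phi kap (fun j => S j)).
  - apply famA_fw; auto.
  - apply famA_P1; auto.
  - apply famA_ss; auto; unfold d; simpl; lra.
  - apply famA_Q0.
  - lra.
  - intros [|m] Hm. lia. rewrite HQ, DS. specialize (Hgphi m). specialize (Dp m). nra.
  - intros eps Heps N. destruct (Hlim (eps/2) ltac:(lra)) as [m0 Hm0].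
    set (m := Nat.max m0 N).
    assert (Hm : (phi - eps/2) * (u m + 1 + g m) <= g m).
    { unfold m. assert (Hk : forall k, (phi - eps/2) * (u (m0 + k)%nat + 1 + g (m0 + k)%nat) <= g (m0 + k)%nat).
      { induction k. rewrite Nat.add_0_r. lra. replace (m0 + S k)%nat with (S (m0 + k)) by lia.
        apply Malpha; auto. lra. }
      replace (Nat.max m0 N) with (m0 + (Nat.max m0 N - m0))%nat by lia. apply Hk. }
    exists (S m). split. unfold m; lia. split. lia. cbv beta.
    rewrite HQ, DS. specialize (Dp m). specialize (Hu m). specialize (Hg m).
    assert ((phi - eps) * (u m + 1 + g m) < g m) by nra. nra.
  - intros j. lia.
  - intros j. lia.
  - exists phi. split. lra. intros alpha Ha.
    destruct (least_witness (fun m => alpha * (u m + 1 + g m) <= g m)) as [j0 Hj0].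
    { intros m. apply Malpha. lra. }
    { destruct (Hlim (phi - alpha) ltac:(lra)) as [m Hm]. exists m.
      replace (phi - (phi - alpha)) with alpha in Hm by ring. lra. }
    exists j0. intros [|m] Hn. lia. rewrite HQ, DS. specialize (Dp m). split.
    + intros Hx. exists m. split; auto. apply Hj0. nra.
    + intros [j [Hj E]]. injection E as ->. apply Hj0 in Hj. nra.
  - intros eps Heps. destruct (K2 eps Heps) as [N HN]. exists N. intros j Hj.
    specialize (HN j Hj).
    replace (d (S j) / (p (S (S j)) + e (S (S j)) + d (S (S j)) - d (S (S j)) + d (S j)))
      with (1 / (u (S j) + 2)); auto.
    unfold p, e, pA, eA. fold d. specialize (Dp (S j)). specialize (Hu (S j)).
    assert (0 < u (S j) * d (S j)) by (apply Rmult_lt_0_compat; lra).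
    field. repeat split; lra.
Qed.

Lemma hk_exists (X B : R) : 1 <= X -> 1 < B -> exists (k : nat) (h : R), 1 < h < B /\ h ^ k = X.
Proof.
  intros HX HB. destruct (Req_dec X 1) as [E|E].
  - exists 0%nat, ((1 + B) / 2). split. lra. simpl. lra.
  - assert (lX : 0 < ln X) by (rewrite <- ln_1; apply ln_increasing; lra).
    assert (lB : 0 < ln B) by (rewrite <- ln_1; apply ln_increasing; lra).
    destruct (INR_archimed (ln B) (ln X) ltac:(lra)) as [k Hk].
    assert (Hk0 : 0 < INR k).
    { destruct k. simpl in Hk. lra. apply lt_0_INR. lia. }
    exists k, (exp (ln X / INR k)). split.
    + split.
      * rewrite <- exp_0. apply exp_increasing. apply Rdiv_lt_0_compat; lra.
      * rewrite <- (exp_ln B) by lra. apply exp_increasing.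
        apply Rmult_lt_reg_r with (INR k); auto. unfold Rdiv. rewrite Rmult_assoc, Rinv_l by lra. lra.
    + rewrite <- Rpower_pow by apply exp_pos. unfold Rpower. rewrite ln_exp.
      replace (INR k * (ln X / INR k)) with (ln X) by (field; lra). apply exp_ln. lra.
Qed.

Lemma bern (x : R) (k : nat) : 1 <= x -> 1 + INR k * (x - 1) <= x ^ k.
Proof.
  intros Hx. induction k. simpl. lra. rewrite S_INR. simpl.
  assert (1 <= x ^ k) by (apply pow_R1_Rle; lra).
  assert (0 <= (x ^ k - 1) * (x - 1)) by (apply Rmult_le_pos; lra). nra.
Qed.

Lemma small_frac (a : R) : 0 <= a <= 1 -> forall eps, 0 < eps ->
  exists N, forall n, (N <= n)%nat -> a / (INR n + 2) < eps.
Proof.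
  intros Ha eps He. destruct (INR_archimed eps 1 He) as [N HN]. exists N. intros n Hn.
  assert (INR N <= INR n) by (apply le_INR; auto). assert (0 <= INR N) by apply pos_INR.
  apply Rmult_lt_reg_r with (INR n + 2). lra. unfold Rdiv. rewrite Rmult_assoc, Rinv_l by lra. nra.
Qed.

Lemma caseB_gen (lh : R) (gm : nat -> R) (B phi : R) :
  0 <= lh <= 1/2 -> 1 < B -> (forall n, B <= gm n) -> 0 < phi <= 1 ->
  (forall n, gm n <= phi * (2 + gm n)) -> (forall h, h < B -> h < phi * (2 + h)) ->
  (forall n, gm n <= gm (S n)) ->
  (forall eps, 0 < eps -> exists N, forall n, (N <= n)%nat -> (phi - eps) * (2 + gm n) < gm n) ->
  exists (q0 : R) (P : nat -> R -> R),
    0 <= q0 /\ is_3system q0 P /\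
    (forall M, exists N, forall q, N <= q -> M < P 1%nat q) /\
    phibar_is (P 3%nat) phi /\
    kappa_is q0 (P 3%nat) (lh / (1 + lh)).
Proof.
  intros Hlh HB HgB Hphi Hgphi HhB Hgm Hlim.
  assert (gmono : forall a b, (a <= b)%nat -> gm a <= gm b).
  { intros a b Hab. induction Hab. lra. specialize (Hgm m). lra. }
  destruct (Req_dec lh 0) as [E0|E0].
  -
    subst lh. set (h := (1 + B) / 2).
    assert (pow_ge : forall j, (j < 2 ^ j)%nat).
    { induction j. simpl. lia. rewrite Nat.pow_succ_r'. lia. }
    apply (famB_main (fun j => 2 ^ (S j))%nat gm h phi).
    + unfold h; lra.
    + intros n. specialize (HgB n). unfold h; lra.
    + exact Hphi.
    + exact Hgphi.
    + apply HhB. unfold h; lra.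
    + intros j. rewrite (Nat.pow_succ_r' 2 (S j)). pose proof (pow_ge (S j)). lia.
    + intros j. pose proof (pow_ge (S j)). lia.
    + intros j. apply gmono. rewrite (Nat.pow_succ_r' 2 (S j)). lia.
    + intros eps Heps. destruct (Hlim eps Heps) as [N HN]. exists N. apply HN.
      pose proof (pow_ge (S N)). lia.
    + intros eps Heps. destruct (INR_archimed (h - 1) (/ eps)) as [N HN]. unfold h; lra.
      exists N. intros j Hj. replace (0 / (1 + 0)) with 0 by field. rewrite Rminus_0_r.
      set (k := (2 ^ S (S j) - S (2 ^ S j))%nat).
      assert (Hkj : (j <= k)%nat).
      { unfold k. rewrite (Nat.pow_succ_r' 2 (S j)). pose proof (pow_ge (S j)). lia. }
      assert (Hhk : 1 + INR k * (h - 1) <= h ^ k) by (apply bern; unfold h; lra).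
      assert (INR N <= INR k) by (apply le_INR; lia).
      assert (0 < h - 1) by (unfold h; lra).
      assert (/ eps < h ^ k) by nra.
      assert (0 < / eps) by (apply Rinv_0_lt_compat; lra).
      rewrite Rabs_pos_eq.
      * apply Rmult_lt_reg_r with (2 * h ^ k + 1). lra.
        unfold Rdiv. rewrite Rmult_1_l, Rinv_l by lra.
        apply Rmult_lt_reg_l with (/ eps). lra. rewrite <- Rmult_assoc, Rinv_l by lra. lra.
      * unfold Rdiv. rewrite Rmult_1_l. left. apply Rinv_0_lt_compat. lra.
  -
    destruct (hk_exists (/ (2 * lh)) B) as [k [h [Hh Hhk]]]; auto.
    { rewrite <- Rinv_1. apply Rinv_le_contravar; lra. }
    apply (famB_main (fun j => (k + 1) * S j)%nat gm h phi).
    + lra.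
    + intros n. specialize (HgB n). lra.
    + exact Hphi.
    + exact Hgphi.
    + apply HhB. lra.
    + intros j. rewrite (Nat.mul_succ_r _ (S j)). lia.
    + intros j. lia.
    + intros j. apply gmono. rewrite (Nat.mul_succ_r _ (S j)). lia.
    + intros eps Heps. destruct (Hlim eps Heps) as [N HN]. exists N. apply HN. nia.
    + intros eps Heps. exists 0%nat. intros j _.
      replace ((k + 1) * S (S j) - S ((k + 1) * S j))%nat with k.
      2:{ rewrite (Nat.mul_succ_r _ (S j)). lia. }
      rewrite Hhk. replace (1 / (2 * / (2 * lh) + 1) - lh / (1 + lh)) with 0.
      rewrite Rabs_R0; lra. field. lra.
Qed.

Definition uA (lh : R) (n : nat) : R := (1 / lh - 1) + (1 - (1 / lh - 1)) / (INR n + 2).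

Lemma ustar_range lh : 1/2 < lh <= 1 -> 0 <= 1 / lh - 1 < 1.
Proof.
  intros H. assert (1 <= 1 / lh /\ 1 / lh < 2); [|lra]. split.
  - apply Rmult_le_reg_r with lh. lra. replace (1 / lh * lh) with 1 by (field; lra). lra.
  - apply Rmult_lt_reg_r with lh. lra. replace (1 / lh * lh) with 1 by (field; lra). lra.
Qed.

Lemma uA_facts lh : 1/2 < lh <= 1 -> forall n,
  1 / lh - 1 < uA lh n < 1 /\ uA lh (S n) <= uA lh n /\
  uA lh n = (1 / lh - 1) + (1 - (1 / lh - 1)) / (INR n + 2).
Proof.
  intros H n. pose proof (ustar_range lh H) as [A B]. set (s := 1 / lh - 1) in *.
  assert (0 <= INR n) by apply pos_INR.
  assert (F : forall m, 0 < (1 - s) / (INR m + 2) < 1 - s).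
  { intros m. assert (0 <= INR m) by apply pos_INR. split.
    apply Rdiv_lt_0_compat; lra.
    apply Rmult_lt_reg_r with (INR m + 2). lra. unfold Rdiv. rewrite Rmult_assoc, Rinv_l by lra. nra. }
  unfold uA. fold s. split; [|split; [|reflexivity]].
  - specialize (F n). lra.
  - rewrite S_INR. apply Rplus_le_compat_l. unfold Rdiv. apply Rmult_le_compat_l. lra.
    apply Rinv_le_contravar; lra.
Qed.

Lemma caseA_gen (lh : R) (g : nat -> R) (c phi : R) :
  1/2 < lh <= 1 -> 1 < c -> (forall n, c <= g n) -> (forall n, 1 < uA lh (S n) * g n) ->
  0 < phi <= 1 -> (forall n, g n <= phi * (uA lh n + 1 + g n)) -> (forall n, g n <= g (S n)) ->
  (forall eps, 0 < eps -> exists n, (phi - eps) * (uA lh n + 1 + g n) < g n) ->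
  exists (q0 : R) (P : nat -> R -> R),
    0 <= q0 /\ is_3system q0 P /\
    (forall M, exists N, forall q, N <= q -> M < P 1%nat q) /\
    phibar_is (P 3%nat) phi /\
    kappa_is q0 (P 3%nat) (lh / (1 + lh)).
Proof.
  intros Hlh Hc Hg Hug Hphi Hgphi Hgm Hlim.
  pose proof (ustar_range lh Hlh) as [A B].
  apply (famA_main g (uA lh) c phi); auto.
  - intros n. destruct (uA_facts lh Hlh n) as [[C D] _]. lra.
  - intros n. apply (uA_facts lh Hlh n).
  - intros eps Heps. destruct (small_frac (1 - (1/lh - 1)) ltac:(lra) eps Heps) as [N HN].
    exists N. intros j Hj. destruct (uA_facts lh Hlh (S j)) as [[C D] [_ E]].
    specialize (HN (S j) ltac:(lia)).
    assert (K : lh / (1 + lh) = 1 / ((1 / lh - 1) + 2)) by (field; lra).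
    rewrite K. set (s := 1 / lh - 1) in *. set (v := uA lh (S j)) in *.
    replace (1 / (v + 2) - 1 / (s + 2)) with ((s - v) / ((v + 2) * (s + 2))) by (field; lra).
    rewrite Rabs_left.
    + apply Rle_lt_trans with (v - s); [|lra].
      replace (- ((s - v) / ((v + 2) * (s + 2)))) with ((v - s) / ((v + 2) * (s + 2))) by (field; lra).
      assert (1 <= (v + 2) * (s + 2)) by nra.
      apply div_le_l. nra.
      assert (0 <= (v - s) * ((v + 2) * (s + 2) - 1)) by (apply Rmult_le_pos; lra). nra.
    + apply Rdiv_neg_pos; nra.
Qed.

Theorem mainTheorem10 (lh : R) (lam : option R) :
  0 <= lh <= 1 -> lam_hyp lh lam ->
  exists (q0 : R) (P : nat -> R -> R),
    0 <= q0 /\ is_3system q0 P /\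
    (forall M, exists N, forall q, N <= q -> M < P 1%nat q) /\
    phibar_is (P 3%nat) (lam_frac lam) /\
    kappa_is q0 (P 3%nat) (lh / (1 + lh)).
Proof.
  intros Hlh Hhyp. destruct lam as [l|]; simpl in *.
  - destruct Hhyp as [Hl [Hlh1 Hlb]].
    assert (Hphi1 : l / (1 + l) * (1 + l) = l) by (field; lra).
    assert (Hphi : 0 < l / (1 + l) < 1).
    { split. apply Rdiv_lt_0_compat; lra. apply Rmult_lt_reg_r with (1 + l). lra. lra. }
    destruct (Rle_or_lt lh (1/2)) as [Hs|Hb].
    + apply (caseB_gen lh (fun _ => 2 * l) (2 * l) (l / (1 + l))); try lra. all: try (intros; lra).
      * intros h Hh. apply Rmult_lt_reg_r with (1 + l). lra.
        replace (l / (1 + l) * (2 + h) * (1 + l)) with (l * (2 + h)) by (field; lra). nra.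
      * intros eps Heps. exists 0%nat. intros n _.
        replace ((l / (1 + l) - eps) * (2 + 2 * l)) with (2 * l - eps * (2 + 2 * l)) by (field; lra). nra.
    + assert (Hlb' : lh * lh <= l * (1 - lh)).
      { apply Rmult_le_compat_r with (r := 1 - lh) in Hlb; [|lra].
        replace (lh * (lh * 1) / (1 - lh) * (1 - lh)) with (lh * lh) in Hlb by (field; lra). exact Hlb. }
      assert (Hllh : lh < l) by nra.
      set (s := 1 / lh - 1). set (g := l / lh).
      assert (Hg1 : 1 < g).
      { unfold g. apply Rmult_lt_reg_r with lh. lra. replace (l / lh * lh) with l by (field; lra). lra. }
      assert (Hsg : 1 <= s * g).
      { unfold s, g. replace ((1 / lh - 1) * (l / lh)) with (l * (1 - lh) / (lh * lh)) by (field; lra).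
        apply div_ge_l. nra. lra. }
      assert (Hfix : l / (1 + l) * (s + 1 + g) = g) by (unfold s, g; field; lra).
      pose proof (ustar_range lh ltac:(lra)) as [S1 S2]. fold s in S1, S2.
      apply (caseA_gen lh (fun _ => g) g (l / (1 + l))); try lra; cbv beta; try (intros; lra).
      * intros n. destruct (uA_facts lh ltac:(lra) (S n)) as [[A _] _]. fold s in A.
        assert (0 < (uA lh (S n) - s) * g) by (apply Rmult_lt_0_compat; lra). nra.
      * intros n. cbv beta. destruct (uA_facts lh ltac:(lra) n) as [[A _] _]. fold s in A.
        set (ph := l / (1 + l)) in *. set (u := uA lh n) in *.
        assert (0 < ph * (u - s)) by (apply Rmult_lt_0_compat; lra).
        replace (ph * (u + 1 + g)) with (ph * (s + 1 + g) + ph * (u - s)) by ring. lra.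
      * intros eps Heps. cbv beta. destruct (small_frac (1 - s) ltac:(lra) eps Heps) as [N HN].
        exists N. destruct (uA_facts lh ltac:(lra) N) as [[A B] [_ E]]. fold s in A, E.
        specialize (HN N (le_n N)).
        set (ph := l / (1 + l)) in *. set (u := uA lh N) in *.
        assert (Hu : u - s < eps) by lra.
        assert (H1 : ph * (u - s) <= u - s).
        { assert (0 <= (1 - ph) * (u - s)) by (apply Rmult_le_pos; lra). nra. }
        assert (H2 : eps < eps * (u + 1 + g)).
        { assert (0 < eps * (u + g)) by (apply Rmult_lt_0_compat; lra). nra. }
        replace ((ph - eps) * (u + 1 + g)) with (ph * (s + 1 + g) + ph * (u - s) - eps * (u + 1 + g)) by ring.
        lra.
  - destruct (Rle_or_lt lh (1/2)) as [Hs|Hb].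
    + apply (caseB_gen lh (fun n => INR n + 3) 2 1); try lra; cbv beta;
        try (intros n; pose proof (pos_INR n); rewrite ?S_INR; lra); try (intros; lra).
      intros eps Heps. destruct (INR_archimed eps 2 Heps) as [N HN]. exists N. intros n Hn.
      assert (INR N <= INR n) by (apply le_INR; auto). nra.
    + pose proof (ustar_range lh ltac:(lra)) as [S1 S2]. set (s := 1 / lh - 1) in *.
      apply (caseA_gen lh (fun n => INR n + 4) 4 1); try lra; cbv beta.
      * intros n. pose proof (pos_INR n). lra.
      * intros n. destruct (uA_facts lh ltac:(lra) (S n)) as [[A B] [_ E]]. fold s in A, E.
        pose proof (pos_INR n).
        assert (E2 : uA lh (S n) * (INR n + 3) = s * (INR n + 2) + 1).
        { rewrite E, S_INR. field. lra. }
        nra.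
      * intros n. destruct (uA_facts lh ltac:(lra) n) as [[A _] _]. fold s in A. lra.
      * intros n. rewrite S_INR. lra.
      * intros eps Heps. destruct (INR_archimed eps 2 Heps) as [N HN]. exists N.
        destruct (uA_facts lh ltac:(lra) N) as [[A B] _]. fold s in A.
        set (u := uA lh N) in *.
        assert (H0 : INR N * eps < eps * (u + 1 + (INR N + 4))).
        { assert (0 < eps * (u + 5)) by (apply Rmult_lt_0_compat; lra). nra. }
        replace ((1 - eps) * (u + 1 + (INR N + 4))) with ((u + 1 + (INR N + 4)) - eps * (u + 1 + (INR N + 4))) by ring.
        lra.
Qed.
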